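(* Let $\mathrm{M}=\langle e_1+I,\ e_2+I,\ -I\rangle$, where $e_1,e_2$ are the standard basis vectors of $E^2$. Then $\Omega:\mathrm{Aff}(\mathrm{M})\to\mathrm{Out}(\mathrm{M})$ is an isomorphism.
   Context: Affine maps of $E^2$ are written $a+A$ ($x\mapsto a+Ax$); $a+I$ is translation by $a$. For a 2-space group $\mathrm{M}$, let $N_A(\mathrm{M})$ be its normalizer in the affine group of $E^2$. Each $a+A\in N_A(\mathrm{M})$ induces an affinity $(a+A)_\star:\mathrm{M}x\mapsto\mathrm{M}(a+Ax)$ of the flat orbifold $E^2/\mathrm{M}$; $\mathrm{Aff}(\mathrm{M})$ is the group of all such affinities. $\Omega:\mathrm{Aff}(\mathrm{M})\to\mathrm{Out}(\mathrm{M})$ sends $(a+A)_\star$ to the outer automorphism class of the automorphism $g\mapsto (a+A)g(a+A)^{-1}$ of $\mathrm{M}$. *)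

(* Defs.v *)
(* the Euclidean plane E^2 is 'cV[R]_2 over R : realType. *)
From HB Require Import structures.
From mathcomp Require Import all_boot all_order all_algebra.
From mathcomp Require Import reals.
Set Implicit Arguments. Unset Strict Implicit. Unset Printing Implicit Defensive.
Import Order.TTheory GRing.Theory Num.Theory.
Local Open Scope ring_scope.

Section Affine.
Variable R : realType.

Record aff := mkAff { atr : 'cV[R]_2; alin : 'M[R]_2 }.

Definition aapp (f : aff) (x : 'cV[R]_2) : 'cV[R]_2 := atr f + alin f *m x.

Definition is_affinity (f : aff) : Prop := alin f \in unitmx.

Definition amul (f g : aff) : aff :=
  mkAff (atr f + alin f *m atr g) (alin f *m alin g).
Definition aid : aff := mkAff 0 1%:M.
Definition ainv (f : aff) : aff :=
  mkAff (- (invmx (alin f) *m atr f)) (invmx (alin f)).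

Definition transl (a : 'cV[R]_2) : aff := mkAff a 1%:M.

(* standard basis vectors e_1, e_2 (indices 0, 1) *)
Definition e (i : 'I_2) : 'cV[R]_2 := \col_j (j == i)%:R.

Inductive gen (S : aff -> Prop) : aff -> Prop :=
  | gen_base g : S g -> gen S g
  | gen_id : gen S aid
  | gen_mul g h : gen S g -> gen S h -> gen S (amul g h)
  | gen_inv g : gen S g -> gen S (ainv g).

Definition Mgrp : aff -> Prop :=
  gen (fun g => g = transl (e 0) \/ g = transl (e 1) \/ g = mkAff 0 (- 1%:M)).

Section Generic.
Variable M : aff -> Prop.

Definition conj_by (phi g : aff) : aff := amul (amul phi g) (ainv phi).

Definition in_normalizer (phi : aff) : Prop :=
  is_affinity phi /\ forall g, M g <-> M (conj_by phi g).

(* the orbit M x, a point of the orbifold E^2/M *)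
Definition orbit (x : 'cV[R]_2) : 'cV[R]_2 -> Prop :=
  fun y => exists2 g, M g & y = aapp g x.

(* phi_* = psi_* as maps of E^2/M : Mx |-> M(phi x) *)
Definition same_induced (phi psi : aff) : Prop :=
  forall x, orbit (aapp phi x) = orbit (aapp psi x).

Definition is_aut (alpha : aff -> aff) : Prop :=
  [/\ forall g, M g -> M (alpha g),
      forall h, M h -> exists2 g, M g & alpha g = h,
      forall g h, M g -> M h -> alpha g = alpha h -> g = h &
      forall g h, M g -> M h -> alpha (amul g h) = amul (alpha g) (alpha h)].

Definition same_outer (alpha beta : aff -> aff) : Prop :=
  exists2 h, M h & forall g, M g -> alpha g = conj_by h (beta g).

End Generic.
End Affine.

(* Main.v *)
Require Import Defs.
From HB Require Import structures.
From mathcomp Require Import all_boot all_order all_algebra.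
From mathcomp Require Import reals.
From mathcomp Require Import ring lra zify.
From Stdlib Require Import FunctionalExtensionality PropExtensionality.
Set Implicit Arguments. Unset Strict Implicit. Unset Printing Implicit Defensive.
Import Order.TTheory GRing.Theory Num.Theory.
Local Open Scope ring_scope.

Section S.
Variable R : realType.
Local Notation aff := (aff R).
Local Notation M := (@Mgrp R).
Local Notation aid := (@aid R).
Local Notation e := (@e R).
Implicit Types f g h p q x : aff.

Lemma aff_eq f g : atr f = atr g -> alin f = alin g -> f = g.
Proof. by case: f g => [a A] [b B] /= -> ->. Qed.

Lemma amulA f g h : amul (amul f g) h = amul f (amul g h).
Proof. by apply: aff_eq => /=; rewrite ?mulmxA // mulmxDr addrA mulmxA. Qed.

Lemma amul1 f : amul aid f = f.
Proof. by apply: aff_eq => /=; rewrite ?mul1mx ?add0r. Qed.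

Lemma amulr1 f : amul f aid = f.
Proof. by apply: aff_eq => /=; rewrite ?mulmx0 ?addr0 ?mulmx1. Qed.

Lemma amulV f : is_affinity f -> amul f (ainv f) = aid.
Proof.
move=> u; apply: aff_eq => /=; last by rewrite mulmxV.
by rewrite mulmxN mulmxA mulmxV // mul1mx subrr.
Qed.

Lemma amulVl f : is_affinity f -> amul (ainv f) f = aid.
Proof.
move=> u; apply: aff_eq => /=; last by rewrite mulVmx.
by rewrite addNr.
Qed.

Lemma amul_unit f g : is_affinity f -> is_affinity g -> is_affinity (amul f g).
Proof. by move=> uf ug; rewrite /is_affinity /= unitmx_mul uf ug. Qed.

Lemma ainv_unit f : is_affinity f -> is_affinity (ainv f).
Proof. by move=> uf; rewrite /is_affinity /= unitmx_inv. Qed.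

Lemma aid_unit : is_affinity aid.
Proof. by rewrite /is_affinity /= unitmx1. Qed.

Lemma amulK f x : is_affinity f -> amul f (amul (ainv f) x) = x.
Proof. by move=> u; rewrite -amulA amulV // amul1. Qed.

Lemma amulKV f x : is_affinity f -> amul (ainv f) (amul f x) = x.
Proof. by move=> u; rewrite -amulA amulVl // amul1. Qed.

Lemma ainv_uniq f x : is_affinity f -> amul f x = aid -> x = ainv f.
Proof. by move=> u h; rewrite -(amulKV x u) h amulr1. Qed.

Lemma ainvK f : is_affinity f -> ainv (ainv f) = f.
Proof. move=> u; symmetry; apply: ainv_uniq; [exact: ainv_unit|exact: amulVl]. Qed.

Lemma ainvM p q : is_affinity p -> is_affinity q ->
  ainv (amul p q) = amul (ainv q) (ainv p).
Proof.
move=> up uq; symmetry; apply: ainv_uniq; first exact: amul_unit.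
by rewrite amulA amulK // amulV.
Qed.

Lemma conjM phi g h : is_affinity phi ->
  conj_by phi (amul g h) = amul (conj_by phi g) (conj_by phi h).
Proof. by move=> u; rewrite /conj_by !amulA amulKV. Qed.

Lemma conj_comp p q g : is_affinity p -> is_affinity q ->
  conj_by (amul p q) g = conj_by p (conj_by q g).
Proof. by move=> up uq; rewrite /conj_by ainvM // !amulA. Qed.

Lemma conjK phi g : is_affinity phi -> conj_by (ainv phi) (conj_by phi g) = g.
Proof. by move=> u; rewrite /conj_by ainvK // !amulA amulKV // amulVl // amulr1. Qed.

Lemma conjKV phi g : is_affinity phi -> conj_by phi (conj_by (ainv phi) g) = g.
Proof. by move=> u; rewrite /conj_by ainvK // !amulA amulK // amulV // amulr1. Qed.

Lemma aapp_mul f g y : aapp (amul f g) y = aapp f (aapp g y).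
Proof. by rewrite /aapp /= mulmxDr mulmxA addrA. Qed.

Lemma aapp_id y : aapp aid y = y.
Proof. by rewrite /aapp /= mul1mx add0r. Qed.


Definition isint (r : R) := exists z : int, r = z%:~R.

Lemma isint0 : isint 0. Proof. by exists 0. Qed.
Lemma isintD a b : isint a -> isint b -> isint (a + b).
Proof. by move=> [z ->] [w ->]; exists (z + w); rewrite intrD. Qed.
Lemma isintN a : isint a -> isint (- a).
Proof. by move=> [z ->]; exists (- z); rewrite intrN. Qed.
Lemma isintB a b : isint a -> isint b -> isint (a - b).
Proof. by move=> ha hb; apply: isintD => //; apply: isintN. Qed.
Lemma isint_sgn s a : (s = 1 \/ s = -1) -> isint a -> isint (s * a).
Proof. by move=> [->|->] ha; rewrite ?mul1r ?mulN1r //; apply: isintN. Qed.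

Lemma isint_small a : isint a -> -1 < a < 1 -> a = 0.
Proof.
move=> [z ->] /andP[h1 h2].
have : (-1 : int) < z by rewrite -(ltr_int R) intrN.
have : z < 1 by rewrite -(ltr_int R).
move=> a1 a2; have -> : z = 0 by lia.
by [].
Qed.

Lemma scalarN1 : - (1%:M : 'M[R]_2) = (-1)%:M.
Proof. by apply/matrixP => i j; rewrite !mxE mulNrn. Qed.

Definition sgn (s : R) := s = 1 \/ s = -1.

Definition Mgood g := exists s, [/\ sgn s, alin g = s%:M & forall i, isint (atr g i 0)].

Lemma Mgood_all g : M g -> Mgood g.
Proof.
elim => {g} [g [->|[->|->]] | | g h _ [s [Hs Hg Ig]] _ [t [Ht Hh Ih]] | g _ [s [Hs Hg Ig]]].
- exists 1; split => //; first by left.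
  by move=> i; rewrite /= mxE; case: (_ == _); [exists 1|exists 0].
- exists 1; split => //; first by left.
  by move=> i; rewrite /= mxE; case: (_ == _); [exists 1|exists 0].
- exists (-1); split => //; first by right.
  + by rewrite /= scalarN1.
  + by move=> i; rewrite /= mxE; apply: isint0.
- exists 1; split => //; first by left.
  by move=> i; rewrite /= mxE; apply: isint0.
- exists (s * t); split.
  + by case: Hs => ->; case: Ht => ->; rewrite ?mul1r ?mulN1r ?opprK; [left|right|right|left].
  + by rewrite /= Hg Hh scalar_mxM.
  + move=> i; rewrite /= Hg mul_scalar_mx !mxE; apply: isintD => //.
    exact: isint_sgn.
- exists s; split => //.
  + by rewrite /= Hg invmx_scalar; case: Hs => ->; rewrite ?invr1 ?invrN1.
  + move=> i; rewrite /= Hg invmx_scalar mul_scalar_mx !mxE; apply: isintN.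
    apply: isint_sgn => //; case: Hs => ->; rewrite ?invr1 ?invrN1; [left|right]; done.
Qed.

Lemma sgn_unit s : sgn s -> ((s%:M : 'M[R]_2) \in unitmx).
Proof. by move=> Hs; rewrite unitmxE det_scalar unitrX // ; case: Hs => ->; rewrite ?unitr1 ?unitrN1. Qed.

Lemma M_unit g : M g -> is_affinity g.
Proof. by move=> /Mgood_all [s [Hs Hg _]]; rewrite /is_affinity Hg sgn_unit. Qed.

End S.

Section S2.
Variable R : realType.
Local Notation aff := (aff R).
Local Notation M := (@Mgrp R).
Local Notation aid := (@aid R).
Local Notation e := (@e R).

Lemma ord2P (i : 'I_2) : i = 0 \/ i = 1.
Proof. case: i => [[|[|i]] Hi]; first (by left; apply/val_inj); first (by right; apply/val_inj); by []. Qed.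

Lemma mulmx2 (C : 'M[R]_2) (v : 'cV[R]_2) i :
  (C *m v) i 0 = C i 0 * v 0 0 + C i 1 * v 1 0.
Proof. rewrite mxE big_ord_recl big_ord1; have -> : lift ord0 ord0 = 1 :> 'I_2 by apply/val_inj. by have -> : ord0 = 0 :> 'I_2 by apply/val_inj. Qed.

Lemma e_entry i j : e j i 0 = (i == j)%:R.
Proof. by rewrite mxE. Qed.

Lemma normM01 (a p : R) : 0 <= p <= 1 -> `|a * p| <= `|a|.
Proof.
move=> /andP[p0 p1]; rewrite normrM (ger0_norm p0).
by apply: ler_piMr.
Qed.


Lemma key (c : 'cV[R]_2) (C : 'M[R]_2) :
  (forall i, isint (c i 0)) ->
  (forall x, exists2 g, M g & c + C *m x = aapp g x) ->
  forall v : 'cV[R]_2, (forall i, 0 <= v i 0 <= 1) ->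
  exists s, sgn s /\ forall i, (C *m v) i 0 = s * v i 0.
Proof.
move=> Ic Hx v Hv.
set S := `|C 0 0| + `|C 0 1| + `|C 1 0| + `|C 1 1|.
have S0 : 0 <= S by rewrite /S; have := normr_ge0 (C 0 0); have := normr_ge0 (C 0 1);
  have := normr_ge0 (C 1 0); have := normr_ge0 (C 1 1); lra.
set K := S + 3.
have K0 : 0 < K by rewrite /K; lra.
set eps := K^-1.
have epsK : eps * K = 1 by rewrite /eps mulVf // gt_eqF.
have eps0 : 0 < eps by rewrite /eps invr_gt0.
have [g Mg Hg] := Hx (eps *: v).
have [t [Ht Hgl Ig]] := Mgood_all Mg.
exists t; split => // i.
set w := C *m v.
have Ei := congr1 (fun m : 'cV[R]_2 => m i 0) Hg.
rewrite /aapp Hgl mul_scalar_mx -scalemxAr -/w !mxE in Ei.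
have Hint : isint (eps * (w i 0 - t * v i 0)).
  have -> : eps * (w i 0 - t * v i 0) = atr g i 0 - c i 0.
    have Ew : w i 0 = \sum_j C i j * v j 0 by rewrite /w mxE.
    move: Ei; rewrite -Ew; set a := eps * w i 0; set b := t * (eps * v i 0); rewrite mulrBr mulrCA -/a -/b; move=> H; rewrite -[a](addKr (c i 0)) H; ring.
  exact: isintB.
have bnd : - K < w i 0 - t * v i 0 < K.
  have [v00 v01] := andP (Hv 0); have [v10 v11] := andP (Hv 1).
  have [vi0 vi1] := andP (Hv i).
  have h1 := normM01 (C i 0) (Hv 0); have h2 := normM01 (C i 1) (Hv 1).
  rewrite ler_norml in h1; rewrite ler_norml in h2.
  case/andP: h1 => h1a h1b; case/andP: h2 => h2a h2b.
  have ht : -1 <= t * v i 0 <= 1 by case: Ht => ->; apply/andP; split; lra.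
  case/andP: ht => hta htb.
  have hS : `|C i 0| + `|C i 1| <= S.
    rewrite /S; have := normr_ge0 (C 0 0); have := normr_ge0 (C 0 1);
    have := normr_ge0 (C 1 0); have := normr_ge0 (C 1 1).
    by case: (ord2P i) => ->; lra.
  rewrite /K /w mulmx2; apply/andP; split; lra.
have := isint_small Hint.
have hb : -1 < eps * (w i 0 - t * v i 0) < 1.
  case/andP: bnd => b1 b2; apply/andP; split; nra.
move=> /(_ hb) /eqP; rewrite mulf_eq0 gt_eqF //= subr_eq0 => /eqP ->.
by [].
Qed.


Lemma Msc s : sgn s -> M (mkAff 0 (s%:M)).
Proof.
case=> ->; first exact: gen_id.
by rewrite -scalarN1; apply: gen_base; right; right.
Qed.

Lemma addE (A B : 'cV[R]_2) i : (A + B) i 0 = A i 0 + B i 0.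
Proof. by rewrite mxE. Qed.

Lemma ent (C : 'M[R]_2) j i : (C *m e j) i 0 = C i j.
Proof.
rewrite mulmx2 !e_entry.
by case: (ord2P j) => ->; rewrite ?eqxx /= ?mulr1 ?mulr0 ?addr0 ?add0r.
Qed.

Lemma inM_of_orbit chi : (forall x, exists2 g, M g & aapp chi x = aapp g x) -> M chi.
Proof.
case: chi => c C H.
have [g0 Mg0 H0] := H 0.
rewrite /aapp /= !mulmx0 !addr0 in H0.
have [s0 [Hs0 Hg0l Ig0]] := Mgood_all Mg0.
have Ic : forall i, isint (c i 0) by rewrite H0.
have Hx : forall x, exists2 g, M g & c + C *m x = aapp g x by exact: H.
have v0 : forall i, 0 <= e 0 i 0 <= 1.
  by move=> i; rewrite e_entry; case: (_ == _); rewrite /= ?lexx ?ler01.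
have v1 : forall i, 0 <= e 1 i 0 <= 1.
  by move=> i; rewrite e_entry; case: (_ == _); rewrite /= ?lexx ?ler01.
have v2 : forall i, 0 <= (e 0 + e 1) i 0 <= 1.
  by move=> i; rewrite addE !e_entry; case: (ord2P i) => -> /=; rewrite ?add0r ?addr0 ?lexx ?ler01.
have [s1 [Hs1 E1]] := key Ic Hx v0.
have [s2 [Hs2 E2]] := key Ic Hx v1.
have [s3 [Hs3 E3]] := key Ic Hx v2.
have c00 := E1 0; have c10 := E1 1; have c01 := E2 0; have c11 := E2 1.
have d0 := E3 0; have d1 := E3 1.
rewrite mulmxDr !addE !ent ?e_entry /= in d0 d1.
rewrite !ent ?e_entry /= in c00 c10 c01 c11.
have HC : C = s1%:M.
  apply/matrixP => i j; rewrite mxE.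
  case: (ord2P i) => ->; case: (ord2P j) => -> /=; rewrite ?c00 ?c10 ?c01 ?c11; lra.
have -> : mkAff c C = amul (amul g0 (mkAff 0 (s0%:M))) (mkAff 0 (s1%:M)).
  apply: aff_eq => /=; first by rewrite !mulmx0 !addr0.
  rewrite Hg0l HC -!scalar_mxM; congr (scalar_mx _).
  by case: Hs0 => ->; rewrite ?mulr1 ?mulN1r ?opprK ?mul1r.
apply: gen_mul; last exact: Msc.
by apply: gen_mul => //; apply: Msc.
Qed.

End S2.

Section S3.
Variable R : realType.
Local Notation aff := (aff R).
Local Notation M := (@Mgrp R).
Local Notation aid := (@aid R).
Local Notation e := (@e R).
Implicit Types f g h p q x : aff.

Lemma part1 phi : in_normalizer M phi -> is_aut M (conj_by phi).
Proof.
move=> [u Hn]; split.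
- by move=> g Mg; apply: (proj1 (Hn g)).
- move=> h Mh; exists (conj_by (ainv phi) h); last exact: conjKV.
  by apply: (proj2 (Hn _)); rewrite conjKV.
- by move=> g h _ _ E; rewrite -(conjK g u) E conjK.
- by move=> g h _ _; apply: conjM.
Qed.

Lemma part3 phi psi : in_normalizer M phi -> in_normalizer M psi ->
  forall g, M g -> conj_by (amul phi psi) g = conj_by phi (conj_by psi g).
Proof. by move=> [u _] [v _] g _; apply: conj_comp. Qed.

Lemma orbit_shift h y : M h -> Defs.orbit M (aapp h y) = Defs.orbit M y.
Proof.
move=> Mh; apply: functional_extensionality => z; apply: propositional_extensionality.
split.
- by move=> [g Mg ->]; exists (amul g h); [exact: gen_mul | rewrite aapp_mul].
- move=> [g Mg ->]; exists (amul g (ainv h)); first by apply: gen_mul => //; apply: gen_inv.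
  by rewrite aapp_mul -(aapp_mul (ainv h) h) amulVl ?aapp_id //; apply: M_unit.
Qed.

Lemma central chi : is_affinity chi -> (forall g, M g -> conj_by chi g = g) -> chi = aid.
Proof.
move=> u H.
have comm : forall g, M g -> amul chi g = amul g chi.
  move=> g Mg; have E := H g Mg; rewrite /conj_by in E.
  by rewrite -[in RHS]E amulA amulVl // amulr1.
case: chi u H comm => c C u H comm.
have Ce : forall j, M (transl (e j)) -> C *m e j = e j.
  move=> j Mj; have := congr1 (@atr R) (comm _ Mj); rewrite /= mul1mx.
  by move/(congr1 (fun v => v - c)); rewrite addrC addKr addrK.
have M0 : M (transl (e 0)) by apply: gen_base; left.
have M1 : M (transl (e 1)) by apply: gen_base; right; left.
have MN : M (mkAff 0 (- 1%:M)) by apply: gen_base; right; right.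
have c0 : c = 0.
  have := congr1 (@atr R) (comm _ MN); rewrite /= mulmx0 addr0 add0r mulNmx mul1mx => E.
  apply/matrixP => i j; move/matrixP: E => /(_ i j); rewrite !mxE; lra.
have C1 : C = 1%:M.
  apply/matrixP => i j; rewrite -ent (Ce j); first by rewrite e_entry !mxE.
  by case: (ord2P j) => ->.
by apply: aff_eq; rewrite /= ?c0 ?C1.
Qed.

Lemma part4 phi psi : in_normalizer M phi -> in_normalizer M psi ->
  same_outer M (conj_by phi) (conj_by psi) -> same_induced M phi psi.
Proof.
move=> [u Hn] [v Hm] [h Mh Hh].
have uh := M_unit Mh.
have uhp := amul_unit uh v.
set chi := amul (ainv (amul h psi)) phi.
have uc : is_affinity chi by apply: amul_unit => //; apply: ainv_unit.
have : chi = aid.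
  apply: central => // g Mg.
  rewrite /chi conj_comp; last by []; last by apply: ainv_unit.
  by rewrite (Hh g Mg) -(conj_comp _ uh v) conjK.
move=> Hc.
have Ephi : phi = amul h psi by rewrite -(amulK phi uhp) -/chi Hc amulr1.
move=> y; by rewrite Ephi aapp_mul orbit_shift.
Qed.

Lemma part2 phi psi : in_normalizer M phi -> in_normalizer M psi ->
  same_induced M phi psi -> same_outer M (conj_by phi) (conj_by psi).
Proof.
move=> [u Hn] [v Hm] Hs.
set chi := amul (ainv phi) psi.
have Mchi : M chi.
  apply: inM_of_orbit => y.
  have : Defs.orbit M (aapp psi y) (aapp psi y) by exists aid; [exact: gen_id | rewrite aapp_id].
  rewrite -Hs => -[g Mg Eg].
  exists (conj_by (ainv phi) g).
    by apply: (proj2 (Hn _)); rewrite conjKV.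
  rewrite /chi /conj_by ainvK // !aapp_mul -Eg.
  by [].
have uc := M_unit Mchi.
have Epsi : psi = amul phi chi by rewrite /chi amulK.
exists (conj_by phi (ainv chi)).
  by apply: (proj1 (Hn _)); apply: gen_inv.
have uhh : is_affinity (conj_by phi (ainv chi)).
  by apply: amul_unit; [apply: amul_unit => //; apply: ainv_unit | apply: ainv_unit].
move=> g Mg; rewrite Epsi -(conj_comp g uhh (amul_unit u uc)).
congr conj_by.
by rewrite /conj_by !amulA amulKV // amulVl // amulr1.
Qed.

End S3.

Section S4.
Variable R : realType.
Local Notation aff := (aff R).
Local Notation M := (@Mgrp R).
Local Notation aid := (@aid R).
Local Notation e := (@e R).
Implicit Types f g h p q x : aff.

Lemma conj_id x : conj_by aid x = x.
Proof. rewrite /conj_by.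
have -> : ainv aid = aid by apply: aff_eq; rewrite /= ?invmx1 ?mul1mx ?mulmx0 ?oppr0.
by rewrite amul1 amulr1.
Qed.

Lemma vec0 (v : 'cV[R]_2) : v + v = 0 -> v = 0.
Proof. by move/matrixP=> H; apply/matrixP => i j; have := H i j; rewrite !mxE; lra. Qed.

Lemma e0_neq : transl (e 0) <> aid.
Proof.
move/(congr1 (@atr R))/matrixP/(_ 0 0); rewrite /= !mxE /=.
by move/eqP; rewrite oner_eq0.
Qed.

Lemma e1_neq : transl (e 1) <> aid.
Proof.
move/(congr1 (@atr R))/matrixP/(_ 1 0); rewrite /= !mxE /=.
by move/eqP; rewrite oner_eq0.
Qed.

Lemma surj alpha : is_aut M alpha ->
  exists2 phi, in_normalizer M phi & same_outer M (conj_by phi) alpha.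
Proof.
case=> Hmap Hsurj Hinj Hhom.
have Mid : M aid by exact: gen_id.
have alpha1 : alpha aid = aid.
  have u := M_unit (Hmap _ Mid).
  have h := Hhom _ _ Mid Mid; rewrite amul1 in h.
  have := amulKV (alpha aid) u; rewrite -h amulVl // => E; exact: esym E.
have lin_tr : forall v, M (transl v) -> transl v <> aid -> alin (alpha (transl v)) = 1%:M.
  move=> v Mv nv; have [s [Hs Hl _]] := Mgood_all (Hmap _ Mv).
  case: Hs => Hs; first by rewrite Hl Hs.
  exfalso; apply: nv.
  set a := alpha (transl v).
  have sq : amul a a = aid.
    apply: aff_eq; rewrite /= Hl Hs ?mul_scalar_mx ?scaleN1r ?subrr //.
    by rewrite -scalarN1 opprK.
  have : alpha (amul (transl v) (transl v)) = alpha aid by rewrite Hhom // sq alpha1.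
  move/Hinj => /(_ (gen_mul Mv Mv) Mid) /(congr1 (@atr R)) /=.
  rewrite mul1mx => /vec0 ->; by apply: aff_eq.
set N := mkAff 0 (- (1%:M : 'M[R]_2)).
have MN : M N by apply: gen_base; right; right.
have M0 : M (transl (e 0)) by apply: gen_base; left.
have M1 : M (transl (e 1)) by apply: gen_base; right; left.
have linN : alin (alpha N) = - 1%:M.
  have [s [Hs Hl _]] := Mgood_all (Hmap _ MN).
  case: Hs => Hs; last by rewrite Hl Hs scalarN1.
  exfalso.
  have NN : amul N N = aid.
    by apply: aff_eq; rewrite /= ?mulmx0 ?addr0 // mulNmx mulmxN opprK mul1mx.
  have sq : amul (alpha N) (alpha N) = aid by rewrite -Hhom // NN alpha1.
  have aN : alpha N = aid.
    apply: aff_eq; last by rewrite Hl Hs.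
    by move/(congr1 (@atr R)): sq; rewrite /= Hl Hs mul1mx => /vec0.
  have := Hinj _ _ MN Mid; rewrite aN alpha1 => /(_ erefl) /(congr1 (@alin R)).
  move/matrixP/(_ 0 0); rewrite /= !mxE /=; lra.
set a1 := atr (alpha (transl (e 0))).
set a2 := atr (alpha (transl (e 1))).
set b := atr (alpha N).
set A : 'M[R]_2 := \matrix_(i, j) (if j == 0 then a1 i 0 else a2 i 0).
have Ae0 : A *m e 0 = a1 by apply/matrixP => i j; rewrite (ord1 j) ent mxE.
have Ae1 : A *m e 1 = a2 by apply/matrixP => i j; rewrite (ord1 j) ent mxE.
set b' := 2^-1 *: b.
have P : forall g, M g ->
    alpha g = mkAff (A *m atr g + (1%:M - alin g) *m b') (alin g).
  move=> g; elim => {g}.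
  - move=> g [->|[->|->]].
    + apply: aff_eq => /=; last exact: lin_tr M0 e0_neq.
      by rewrite Ae0 subrr mul0mx addr0.
    + apply: aff_eq => /=; last exact: lin_tr M1 e1_neq.
      by rewrite Ae1 subrr mul0mx addr0.
    + apply: aff_eq => /=; last exact: linN.
      rewrite mulmx0 add0r opprK mulmxDl mul1mx /b' -scalerDl.
      have -> : (2^-1 + 2^-1 : R) = 1 by field.
      by rewrite scale1r.
  - by rewrite alpha1; apply: aff_eq; rewrite /= ?mulmx0 ?subrr ?mul0mx ?addr0.
  - move=> g h Mg Eg Mh Eh.
    have [s [Hs Hg _]] := Mgood_all Mg; have [t [Ht Hh _]] := Mgood_all Mh.
    rewrite Hhom // Eg Eh; apply: aff_eq => //=.
    rewrite Hg Hh -scalar_mxM !mulmxBl !mul1mx !mul_scalar_mx mulmxDr.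
    rewrite -scalemxAr.
    set An := A *m atr g; set Ah := A *m atr h.
    by apply/matrixP => i j; rewrite !mxE; ring.
  - move=> g Mg Eg.
    have [s [Hs Hg _]] := Mgood_all Mg.
    have ug := M_unit Mg; have uag := M_unit (Hmap _ Mg).
    have -> : alpha (ainv g) = ainv (alpha g).
      apply: ainv_uniq => //; rewrite -Hhom ?amulV //; exact: gen_inv.
    rewrite Eg; apply: aff_eq => //=; rewrite Hg invmx_scalar //.
    rewrite !mulmxBl !mul1mx !mul_scalar_mx mulmxN -scalemxAr.
    set An := A *m atr g.
    case: Hs => ->; rewrite ?invr1 ?invrN1;
    by apply/matrixP => i j; rewrite !mxE; ring.
have [g1 Mg1 Eg1] := Hsurj _ M0.
have [g2 Mg2 Eg2] := Hsurj _ M1.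
have Ag : forall g v, M g -> alpha g = transl v -> A *m atr g = v.
  move=> g v Mg Eg; have E := P _ Mg; rewrite Eg in E.
  have L : alin g = 1%:M by move/(congr1 (@alin R)): E => /= <-.
  by move/(congr1 (@atr R)): E; rewrite /= L subrr mul0mx addr0 => <-.
set B : 'M[R]_2 := \matrix_(i, j) (if j == 0 then atr g1 i 0 else atr g2 i 0).
have Be0 : B *m e 0 = atr g1 by apply/matrixP => i j; rewrite (ord1 j) ent mxE.
have Be1 : B *m e 1 = atr g2 by apply/matrixP => i j; rewrite (ord1 j) ent mxE.
have AB : A *m B = 1%:M.
  apply/matrixP => i j; rewrite -ent -mulmxA.
  case: (ord2P j) => ->; rewrite ?Be0 ?Be1 ?(Ag _ _ Mg1 Eg1) ?(Ag _ _ Mg2 Eg2);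
  by rewrite e_entry mxE.
have uA : A \in unitmx by case: (mulmx1_unit AB).
set phi := mkAff b' A.
have uphi : is_affinity phi by [].
have conjE : forall g, M g -> conj_by phi g = alpha g.
  move=> g Mg; rewrite (P g Mg).
  have [s [Hs Hg _]] := Mgood_all Mg.
  rewrite /conj_by; apply: aff_eq => /=; rewrite Hg.
    rewrite scalar_mxC -mulmxA mulmxN [A *m (invmx A *m _)]mulmxA mulmxV // mul1mx.
    rewrite !mulmxBl !mul1mx !mul_scalar_mx.
    set An := A *m atr g.
    by apply/matrixP => i j; rewrite !mxE; ring.
  by rewrite scalar_mxC -mulmxA mulmxV // mulmx1.
exists phi.
  split => // g; split => [Mg|Mc]; first by rewrite conjE //; apply: Hmap.
  have [g' Mg' Eg'] := Hsurj _ Mc.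
  rewrite -conjE // in Eg'.
  by have := congr1 (conj_by (ainv phi)) Eg'; rewrite !conjK // => <-.
by exists aid => // g Mg; rewrite conj_id conjE.
Qed.

End S4.

Theorem lemma19 (R : realType) :
  let M := @Mgrp R in
  (* Omega takes values in Out(M) *)
  (forall phi, in_normalizer M phi -> is_aut M (conj_by phi)) /\
  (* well-defined on affinities of the orbifold *)
  (forall phi psi, in_normalizer M phi -> in_normalizer M psi ->
     same_induced M phi psi -> same_outer M (conj_by phi) (conj_by psi)) /\
  (* homomorphism: (phi psi)_* = phi_* psi_* is sent to the composite *)
  (forall phi psi, in_normalizer M phi -> in_normalizer M psi ->
     forall g, M g -> conj_by (amul phi psi) g = conj_by phi (conj_by psi g)) /\
  (* injective *)
  (forall phi psi, in_normalizer M phi -> in_normalizer M psi ->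
     same_outer M (conj_by phi) (conj_by psi) -> same_induced M phi psi) /\
  (* surjective *)
  (forall alpha, is_aut M alpha ->
     exists2 phi, in_normalizer M phi & same_outer M (conj_by phi) alpha).
Proof.
move=> M; split; first exact: part1.
split; first exact: part2.
split; first exact: part3.
split; first exact: part4.
exact: surj.
Qed.
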